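(* For every finite graph $G$: $G$ is a blue-red interval graph if and only if $G$ is a linear leaf power.
   Context: A leaf root of a graph $G$ is a pair $(T,\mathsf{w})$ where $T$ is a tree and $\mathsf{w}:E(T)\to[0,1]$ is a rational-valued edge-weight function, such that the vertices of $G$ are exactly the leaves of $T$ and for all distinct $u,v\in V(G)$, $uv\in E(G)$ iff $d_T(u,v)\le 1$, where $d_T(x,y)$ is the sum of the weights of the edges on the unique path of $T$ between $x$ and $y$. A caterpillar is a tree having a path that contains all nodes of degree at least $2$. A graph is a linear leaf power if it admits a leaf root $(T,\mathsf{w})$ with $T$ a caterpillar. A graph $G$ is a blue-red interval graph if there exist a bipartition $(B,R)$ of $V(G)$ and closed intervals $I_v\subseteq\mathbb{Q}$, $v\in V(G)$, such that $E(G)=\{b_1b_2 : b_1,b_2\in B,\ b_1\neq b_2,\ I_{b_1}\cap I_{b_2}\neq\emptyset\}\cup\{rb : r\in R,\ b\in B,\ I_r\subseteq I_b\}$ (in particular $R$ is an independent set). *)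

(* Defs.v *)
From HB Require Import structures.
From mathcomp Require Import all_boot all_order all_algebra.
Set Implicit Arguments. Unset Strict Implicit. Unset Printing Implicit Defensive.
Import Order.TTheory GRing.Theory Num.Theory.
Local Open Scope ring_scope.

Definition simple_graph (V : finType) (e : rel V) : Prop :=
  symmetric e /\ irreflexive e.

Definition in_itv (V : Type) (lo hi : V -> rat) (v : V) (x : rat) : Prop :=
  lo v <= x <= hi v.

Definition blue_red_interval (V : finType) (e : rel V) : Prop :=
  exists (B : {set V}) (lo hi : V -> rat),
    (forall v, lo v <= hi v) /\
    forall u v : V,
      e u v <->
      ( (u \in B /\ v \in B /\ u != v /\
           exists x, in_itv lo hi u x /\ in_itv lo hi v x)
      \/ (u \notin B /\ v \in B /\
           forall x, in_itv lo hi u x -> in_itv lo hi v x)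
      \/ (u \in B /\ v \notin B /\
           forall x, in_itv lo hi v x -> in_itv lo hi u x) ).

Definition simple_path (N : finType) (t : rel N) (x : N) (p : seq N) (y : N) : bool :=
  path t x p && uniq (x :: p) && (last x p == y).

(* a tree: symmetric irreflexive relation with a unique simple path between
   any two nodes (the empty node type is allowed) *)
Definition is_tree (N : finType) (t : rel N) : Prop :=
  symmetric t /\ irreflexive t /\
  forall x y : N, exists! p : seq N, simple_path t x p y.

Definition degree (N : finType) (t : rel N) (x : N) : nat := #|[set y | t x y]|.

Definition is_leaf (N : finType) (t : rel N) (x : N) : bool := (degree t x <= 1)%N.

Definition is_caterpillar (N : finType) (t : rel N) : Prop :=
  is_tree t /\
  exists s : seq N,
    match s with [::] => true | x :: s' => path t x s' && uniq s end /\
    forall x, (2 <= degree t x)%N -> x \in s.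

Fixpoint path_weight (N : Type) (w : N -> N -> rat) (x : N) (p : seq N) : rat :=
  match p with
  | [::] => 0
  | y :: p' => w x y + path_weight w y p'
  end.

Definition tree_dist (N : finType) (t : rel N) (w : N -> N -> rat) (u v : N) (r : rat) : Prop :=
  exists p, simple_path t u p v /\ path_weight w u p = r.

Definition leaf_root (V : finType) (e : rel V) (N : finType) (t : rel N)
    (w : N -> N -> rat) (f : V -> N) : Prop :=
  is_tree t /\
  (forall x y, t x y -> 0 <= w x y <= 1 /\ w x y = w y x) /\
  injective f /\
  (forall x : N, is_leaf t x <-> exists v, f v = x) /\
  (forall u v : V, u != v ->
     (e u v <-> exists r, tree_dist t w (f u) (f v) r /\ r <= 1)).

Definition linear_leaf_power (V : finType) (e : rel V) : Prop :=
  exists (N : finType) (t : rel N) (w : N -> N -> rat) (f : V -> N),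
    is_caterpillar t /\ leaf_root e t w f.

(* Main.v *)
Require Import Defs.
From HB Require Import structures.
From mathcomp Require Import all_boot all_order all_algebra.
From mathcomp Require Import ring lra zify.
From Stdlib Require Import Lia.
Set Implicit Arguments. Unset Strict Implicit. Unset Printing Implicit Defensive.
Import Order.TTheory GRing.Theory Num.Theory.

Definition prel (N : eqType) (par : N -> N) : rel N :=
  fun x y => (x != y) && ((par x == y) || (par y == x)).

Definition Sub (N : Type) (par : N -> N) (a z : N) := exists k, iter k par z = a.

Lemma h_iter (N : Type) (par : N -> N) (h : N -> nat) :
  (forall z, par z = z \/ (h (par z) < h z)%N) ->
  forall k z, (h (iter k par z) <= h z)%N.
Proof.
move=> H; elim=> [|k IH] z //=.
case: (H (iter k par z)) => [-> // | lt].
by apply: leq_trans (ltnW lt) (IH z).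
Qed.

Lemma step_par (N : Type) (par : N -> N) a z :
  z <> a -> (Sub par a z <-> Sub par a (par z)).
Proof.
move=> za; split.
  move=> [[|k] E]; first by case: za.
  by exists k; rewrite -iterSr.
by move=> [k E]; exists k.+1; rewrite iterSr.
Qed.

Lemma step_edge (N : eqType) (par : N -> N) a u u' :
  prel par u u' -> u <> par a -> u' <> par a -> (Sub par a u <-> Sub par a u').
Proof.
move=> /andP [_ /orP [/eqP E | /eqP E]] hu hu'.
  case: (eqVneq u a) => [ua | ua]; first by case: hu'; rewrite -E ua.
  by rewrite -E; apply: step_par; apply/eqP.
case: (eqVneq u' a) => [ua | ua]; first by case: hu; rewrite -E ua.
by rewrite -E; symmetry; apply: step_par; apply/eqP.
Qed.

Lemma walk_inv (N : eqType) (par : N -> N) a z q :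
  path (prel par) z q -> par a \notin z :: q ->
  (Sub par a z <-> Sub par a (last z q)).
Proof.
elim: q z => [|y q IH] z //= /andP [ezy pq].
rewrite in_cons negb_or => /andP [nz nq].
apply: (iff_trans _ (IH y pq nq)).
refine (step_edge ezy _ _).
  by move=> E; move: nz; rewrite E eqxx.
by move=> E; move: nq; rewrite in_cons E eqxx.
Qed.

Lemma lemD (N : Type) (par : N -> N) (h : N -> nat) a b y :
  (forall z, par z = z \/ (h (par z) < h z)%N) ->
  Sub par a y -> Sub par b y -> par a = par b -> par a <> a -> par b <> b -> a = b.
Proof.
move=> H.
suff W : forall a b, Sub par a y -> Sub par b y -> par a = par b -> par b <> b ->
   forall k m, iter k par y = a -> iter m par y = b -> (k <= m)%N -> a = b.
  move=> [k Ek] [m Em] pab na nb.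
  case: (leqP k m) => km.
    exact: (W a b (ex_intro _ k Ek) (ex_intro _ m Em) pab nb k m).
  symmetry; apply: (W b a (ex_intro _ m Em) (ex_intro _ k Ek) (esym pab) na m k) => //.
  exact: ltnW.
move=> {}a {}b _ _ pab nb k m Ek Em km.
have [d Ed] : exists d, m = (d + k)%N by exists (m - k)%N; lia.
rewrite Ed iterD Ek in Em.
case: d Ed Em => [//|d] _ Em.
rewrite iterSr in Em.
have := h_iter H d (par a); rewrite Em pab.
case: (H b) => [//|lt le]; lia.
Qed.

Lemma nocycle (N : Type) (par : N -> N) (h : N -> nat) k z :
  (forall z, par z = z \/ (h (par z) < h z)%N) ->
  par z <> z -> iter k.+1 par z <> z.
Proof.
move=> H nz E.
have := h_iter H k (par z); rewrite -iterSr E.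
case: (H z) => [//|lt le]; lia.
Qed.

Lemma key_contra (N : eqType) (par : N -> N) (h : N -> nat) x a b y p q :
  (forall z, par z = z \/ (h (par z) < h z)%N) ->
  a != b -> par a = x -> a != x -> path (prel par) a p -> last a p = y ->
  x \notin a :: p -> prel par x b -> path (prel par) b q -> last b q = y ->
  x \notin b :: q -> False.
Proof.
move=> H ab pa ax pp lp xp xb pq lq xq.
have Sa : Sub par a y.
  rewrite -lp; apply/(walk_inv pp); first by rewrite pa.
  by exists 0%N.
move: xb => /andP [xb /orP [/eqP pxb | /eqP pbx]].
  have [k Ek] : Sub par a b by apply/(walk_inv pq); rewrite ?pa ?lq.
  apply: (nocycle (k := k.+1) H (_ : par x <> x)).
    by rewrite pxb => E; move: xb; rewrite E eqxx.
  by rewrite iterS iterSr pxb Ek pa.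
have Sb : Sub par b y.
  rewrite -lq; apply/(walk_inv pq); first by rewrite pbx.
  by exists 0%N.
have E := lemD H Sa Sb (etrans pa (esym pbx)).
move: ab; rewrite E ?eqxx //.
- by rewrite pa => E'; move: ax; rewrite E' eqxx.
- by rewrite pbx => E'; move: xb; rewrite E' eqxx.
Qed.

Lemma tree_uniq (N : finType) (par : N -> N) (h : N -> nat) :
  (forall z, par z = z \/ (h (par z) < h z)%N) ->
  forall p q x y, simple_path (prel par) x p y -> simple_path (prel par) x q y -> p = q.
Proof.
move=> H; elim=> [|a p IH] [|b q] x y //.
- move=> /andP [_ /eqP ly] /andP [/andP [_ uq] /eqP lq].
  move: uq => /= /andP [/negP []].
  rewrite [X in X \in _](_ : x = last b q); first exact: mem_last.
  by rewrite -[x]/(last x [::]) ly -lq.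
- move=> /andP [/andP [_ uq] /eqP lq] /andP [_ /eqP ly].
  move: uq => /= /andP [/negP []].
  rewrite [X in X \in _](_ : x = last a p); first exact: mem_last.
  by rewrite -[x]/(last x [::]) ly -lq.
move=> /andP [/andP [/= /andP [xa pp] up] /eqP lp].
move=> /andP [/andP [/= /andP [xb pq] uq] /eqP lq].
case: (eqVneq a b) => [eab | nab].
  subst b; congr (_ :: _); apply: (IH q a y).
    by rewrite /simple_path pp lp eqxx; move: up => /= /andP [_ ->].
  by rewrite /simple_path pq lq eqxx; move: uq => /= /andP [_ ->].
exfalso.
have xp : x \notin a :: p by move: up => /andP [].
have xq : x \notin b :: q by move: uq => /andP [].
move: (xa) => /andP [nxa /orP [/eqP pxa | /eqP pax]].
  move: (xb) => /andP [nxb /orP [/eqP pxb | /eqP pbx]].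
    by move: nab; rewrite -pxa -pxb eqxx.
  apply: (key_contra H (_ : b != a) pbx _ pq lq xq xa pp lp xp).
    by rewrite eq_sym.
  by rewrite eq_sym.
apply: (key_contra H nab pax _ pp lp xp xb pq lq xq).
by rewrite eq_sym.
Qed.

Lemma parent_tree (N : finType) (par : N -> N) (h : N -> nat) (r : N) :
  (forall z, par z = z \/ (h (par z) < h z)%N) ->
  (forall z, exists k, iter k par z = r) ->
  is_tree (prel par).
Proof.
move=> H R.
have st : symmetric (prel par) by move=> x y; rewrite /prel eq_sym orbC.
have irr : irreflexive (prel par) by move=> x; rewrite /prel eqxx.
split => //; split => // x y.
have cp : forall z, connect (prel par) z (par z).
  move=> z; case: (eqVneq (par z) z) => [->|ne]; first exact: connect0.
  by apply: connect1; rewrite /prel eq_sym ne eqxx.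
have pc : forall z, connect (prel par) (par z) z.
  move=> z; case: (eqVneq (par z) z) => [->|ne]; first exact: connect0.
  by apply: connect1; rewrite /prel ne eqxx orbT.
have up : forall k z, connect (prel par) z (iter k par z).
  elim=> [|k IH] z; first exact: connect0.
  by rewrite iterS; apply: connect_trans (IH z) (cp _).
have down : forall k z, connect (prel par) (iter k par z) z.
  elim=> [|k IH] z; first exact: connect0.
  by rewrite iterS; apply: connect_trans (pc _) (IH z).
have [kx Ex] := R x; have [ky Ey] := R y.
have cxy : connect (prel par) x y.
  by apply: connect_trans (up kx x) _; rewrite Ex -Ey.
move/connectP: cxy => [p pp ->].
case: (shortenP pp) => p' pp' up' _.
exists p'; split; first by rewrite /simple_path pp' up' eqxx.
move=> q sq; apply: (tree_uniq H (x := x) (y := last x p')) => //.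
by rewrite /simple_path pp' up' eqxx.
Qed.

Local Open Scope ring_scope.

Lemma pw_cat (N : Type) (w : N -> N -> rat) x p q :
  path_weight w x (p ++ q) = path_weight w x p + path_weight w (last x p) q.
Proof.
elim: p x => [|y p IH] x /=; first by rewrite add0r.
by rewrite IH addrA.
Qed.

Lemma pw_rcons (N : Type) (w : N -> N -> rat) x p z :
  path_weight w x (rcons p z) = path_weight w x p + w (last x p) z.
Proof. by rewrite -cats1 pw_cat /= addr0. Qed.

Lemma tree_dist_eq (N : finType) (t : rel N) w u p v r :
  is_tree t -> simple_path t u p v ->
  (tree_dist t w u v r <-> r = path_weight w u p).
Proof.
move=> [_ [_ H]] sp; case: (H u v) => p0 [_ U].
have e1 := U _ sp.
split.
  by move=> [p' [sp' <-]]; rewrite -e1 (U _ sp').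
by move=> ->; exists p.
Qed.

Lemma last_rev_belast (T : Type) (x : T) p :
  last (last x p) (rev (belast x p)) = x.
Proof.
case: p => [|a p] //=.
by rewrite rev_cons last_rcons.
Qed.

Lemma sp_rev (N : finType) (t : rel N) x p y :
  symmetric t -> simple_path t x p y -> simple_path t y (rev (belast x p)) x.
Proof.
move=> st /andP [/andP [pp up] /eqP ly].
rewrite /simple_path -ly last_rev_belast eqxx andbT.
apply/andP; split.
  rewrite rev_path; apply: sub_path pp => a b; by rewrite st.
by rewrite -rev_rcons -lastI rev_uniq.
Qed.

Lemma pw_rev (N : Type) (t : rel N) (w : N -> N -> rat) x p :
  (forall a b, t a b -> w a b = w b a) -> path t x p ->
  path_weight w (last x p) (rev (belast x p)) = path_weight w x p.
Proof.
move=> ws; elim: p x => [|a p IH] x //= /andP [txa pp].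
rewrite rev_cons pw_rcons IH // last_rev_belast (ws _ _ txa).
by rewrite addrC.
Qed.

Lemma tree_dist_sym (N : finType) (t : rel N) w u v r :
  is_tree t -> (forall a b, t a b -> w a b = w b a) ->
  tree_dist t w u v r -> tree_dist t w v u r.
Proof.
move=> [st _] ws [p [spp <-]].
exists (rev (belast u p)); split; first exact: sp_rev.
move: spp => /andP [/andP [pp _] /eqP <-].
exact: (pw_rev ws pp).
Qed.

Lemma pw_ge0 (N : Type) (t : rel N) (w : N -> N -> rat) x p :
  (forall a b, t a b -> 0 <= w a b) -> path t x p -> 0 <= path_weight w x p.
Proof.
move=> wp; elim: p x => [|a p IH] x //= /andP [txa pp].
by apply: addr_ge0; [apply: wp | apply: IH].
Qed.

Definition lw (N : Type) (w : N -> N -> rat) (L : seq N) :=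
  if L is x :: L' then path_weight w x L' else 0.
Definition Dsp (N : eqType) (w : N -> N -> rat) (sp : seq N) (y : N) :=
  lw w (take (index y sp).+1 sp).

Lemma seg (N : eqType) (t : rel N) w sp yu yv :
  sorted t sp -> uniq sp -> yu \in sp -> yv \in sp ->
  (index yu sp <= index yv sp)%N ->
  exists L', [/\ path t yu L', uniq (yu :: L'), last yu L' = yv,
     {subset L' <= sp} & Dsp w sp yv - Dsp w sp yu = path_weight w yu L'].
Proof.
move=> ss us yus yvs le.
set iu := index yu sp in le *; set iv := index yv sp in le *.
have ivs : (iv < size sp)%N by rewrite index_mem.
set T := take iv.+1 sp.
have sT : size T = iv.+1 by rewrite size_takel.
have hT : drop iu T = yu :: drop iu.+1 T.
  rewrite (drop_nth yu); last by rewrite sT ltnS.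
  by rewrite nth_take ?ltnS // nth_index.
exists (drop iu.+1 T); split.
- by rewrite -/(sorted t (yu :: _)) -hT drop_sorted // take_sorted.
- by rewrite -hT drop_uniq // take_uniq.
- rewrite -[last yu _]/(last yu (yu :: drop iu.+1 T)) -hT -nth_last size_drop sT.
  rewrite nth_drop nth_take; last by rewrite ltnS; lia.
  have -> : (iu + (iv.+1 - iu).-1 = iv)%N by lia.
  by rewrite nth_index.
- by move=> z /mem_drop /mem_take.
rewrite /Dsp -/iu -/iv -/T.
rewrite -{1}(cat_take_drop iu.+1 T) take_takel //.
case: sp ss us yus yvs @iu @iv ivs @T sT hT le => [//|s0 sp'] ss us yus yvs iu iv ivs T sT hT le.
rewrite [take iu.+1 _]/= /= pw_cat.
have -> : last s0 (take iu sp') = yu.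
  rewrite -[last s0 _]/(last s0 (s0 :: take iu sp')) -nth_last /= size_takel.
    by rewrite -[s0 :: take iu sp']/(take iu.+1 (s0 :: sp')) nth_take // /iu nth_index.
  move: ivs le; rewrite /= ltnS; lia.
by rewrite addrC addKr.
Qed.

Definition attached (N : eqType) (t : rel N) (w : N -> N -> rat) (sp : seq N)
  (u y : N) (a : rat) :=
  (u \in sp /\ y = u /\ a = 0) \/ (u \notin sp /\ y \in sp /\ t u y /\ a = w u y).

Lemma attached_in (N : eqType) (t : rel N) w sp u y a :
  attached t w sp u y a -> y \in sp.
Proof. by case=> [[? [-> _]] | [_ [? _]]]. Qed.

Lemma catdist (N : finType) (t : rel N) w sp u v yu yv au av r :
  is_tree t -> (forall a b, t a b -> w a b = w b a) -> sorted t sp -> uniq sp ->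
  attached t w sp u yu au -> attached t w sp v yv av -> u != v ->
  (index yu sp <= index yv sp)%N ->
  tree_dist t w u v r <-> r = au + av + (Dsp w sp yv - Dsp w sp yu).
Proof.
move=> tr ws ss us Au Av uv le.
have [L' [pL uL lL sL ->]] := seg w ss us (attached_in Au) (attached_in Av) le.
have st : symmetric t by case: tr.
have yus := attached_in Au.
have sub : forall z, z \in yu :: L' -> z \in sp.
  by move=> z; rewrite inE => /orP [/eqP -> // | /sL].
case: Au => [[uin [eu ea]] | [uin [_ [tu ea]]]];
case: Av => [[vin [ev eb]] | [vin [_ [tv eb]]]].
- rewrite ea eb -eu -ev; have SP : simple_path t yu L' yv by rewrite /simple_path pL uL lL eqxx.
  have := tree_dist_eq w r tr SP; by rewrite !add0r.
- rewrite ea eb -eu; have SP : simple_path t yu (rcons L' v) v.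
    rewrite /simple_path rcons_path pL lL st tv -rcons_cons rcons_uniq uL last_rcons eqxx !andbT /=.
    by apply/negP => /sub; rewrite (negbTE vin).
  have := tree_dist_eq w r tr SP; by rewrite pw_rcons lL add0r (ws _ _ tv) [_ + path_weight _ _ _]addrC.
- rewrite ea eb -ev; have SP : simple_path t u (yu :: L') yv.
    rewrite /simple_path /= tu pL lL eqxx andbT.
    move: uL => /= ->; rewrite andbT.
    by apply/negP => /sub; rewrite (negbTE uin).
  have := tree_dist_eq w r tr SP; by rewrite /= addr0.
- rewrite ea eb; have SP : simple_path t u (yu :: rcons L' v) v.
    rewrite /simple_path /= tu rcons_path pL lL st tv last_rcons eqxx !andbT /=.
    rewrite -[(yu \notin _) && _]/(uniq (yu :: rcons L' v)) -rcons_cons rcons_uniq uL andbT.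
    apply/andP; split.
      rewrite mem_rcons in_cons negb_or uv /=.
      by apply/negP => /sub; rewrite (negbTE uin).
    by apply/negP => /sub; rewrite (negbTE vin).
  have := tree_dist_eq w r tr SP.
  rewrite /= pw_rcons lL (ws _ _ tv) => ->; by split => ->; ring.
Qed.

Lemma catdist_full (N : finType) (t : rel N) w sp u v yu yv au av r :
  is_tree t -> (forall a b, t a b -> w a b = w b a) ->
  (forall a b, t a b -> 0 <= w a b) -> sorted t sp -> uniq sp ->
  attached t w sp u yu au -> attached t w sp v yv av -> u != v ->
  tree_dist t w u v r <-> r = au + av + `|Dsp w sp yu - Dsp w sp yv|.
Proof.
move=> tr ws wp ss us Au Av uv.
have yus := attached_in Au; have yvs := attached_in Av.
case: (leqP (index yu sp) (index yv sp)) => le.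
  have [L' [pL _ _ _ E]] := seg w ss us yus yvs le.
  rewrite distrC ger0_norm; last by rewrite E (pw_ge0 wp pL).
  exact: catdist.
have le' := ltnW le.
have [L' [pL _ _ _ E]] := seg w ss us yvs yus le'.
rewrite ger0_norm; last by rewrite E (pw_ge0 wp pL).
have vu : v != u by rewrite eq_sym.
have H := catdist r tr ws ss us Av Au vu le'.
split.
  move=> /(tree_dist_sym tr ws) /H ->; ring.
move=> Er; apply: (tree_dist_sym tr ws); apply/H; rewrite Er; ring.
Qed.

Lemma deg2 (N : finType) (t : rel N) y a b :
  t y a -> t y b -> a != b -> (2 <= degree t y)%N.
Proof.
move=> ya yb ab; rewrite /degree.
apply: leq_trans (subset_leq_card (_ : [set a; b] \subset _)); first by rewrite cards2 ab.
by apply/subsetP => z; rewrite !inE => /orP [/eqP -> | /eqP ->].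
Qed.

Lemma attach_exists (N : finType) (t : rel N) (w : N -> N -> rat) (sp : seq N) (u : N) :
  is_tree t -> (forall x, (2 <= degree t x)%N -> x \in sp) -> sp != [::] ->
  exists y a, attached t w sp u y a.
Proof.
move=> tr cov ne.
case uin: (u \in sp); first by exists u, 0; left.
case: sp ne cov uin => [//|z sp'] _ cov uin.
have [st [irr H]] := tr.
have [p [/andP [/andP [pp up] /eqP lp] _]] := H u z.
case: p pp up lp => [|y p] /=.
  by move=> _ _ E; move: uin; rewrite -E mem_head.
move=> /andP [tuy pp] up lp.
case yin: (y \in z :: sp').
  by exists y, (w u y); right; rewrite uin yin tuy.
have yn : y \notin z :: sp' by rewrite yin.
exfalso; move/negP: yn; apply; apply: cov.
case: p pp up lp => [|y' p] /=.
  by move=> _ _ E; move: yin; rewrite E mem_head.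
move=> /andP [tyy' _] up _.
apply: (deg2 (a := u) (b := y')); first by rewrite st.
  done.
by move: up; rewrite !inE !negb_or => /and4P [/and3P [_ ? _] _ _ _].
Qed.

Lemma absle (z c : rat) : (`|z| <= c) <-> (z <= c /\ - z <= c).
Proof.
rewrite ler_norml; split; first by move=> /andP [h1 h2]; split; lra.
by move=> [h1 h2]; apply/andP; split; lra.
Qed.

Lemma abs_sum (A z : rat) : (A + `|z| <= 1) <-> (z <= 1 - A /\ - z <= 1 - A).
Proof.
rewrite -absle; split => h; lra.
Qed.

Lemma itvQ_meet (l1 h1 l2 h2 : rat) : l1 <= h1 -> l2 <= h2 ->
  (exists x, (l1 <= x <= h1) /\ (l2 <= x <= h2)) <->
  `|(l1 + h1) - (l2 + h2)| <= (h1 - l1) + (h2 - l2).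
Proof.
move=> le1 le2; rewrite absle; split.
  by move=> [x [/andP [a b] /andP [c d]]]; split; lra.
move=> [a b].
case: (lerP l1 l2) => c.
  by exists l2; split; apply/andP; split; lra.
by exists l1; split; apply/andP; split; lra.
Qed.

Lemma itvQ_sub (l1 h1 l2 h2 : rat) : l1 <= h1 ->
  (forall x, l1 <= x <= h1 -> l2 <= x <= h2) <->
  `|(l1 + h1) - (l2 + h2)| <= (h2 - l2) - (h1 - l1).
Proof.
move=> le1; rewrite absle; split.
  move=> H.
  have /andP [a b] : l2 <= l1 <= h2 by apply: H; rewrite lexx le1.
  have /andP [c d] : l2 <= h1 <= h2 by apply: H; rewrite lexx le1.
  split; lra.
move=> [a b] x /andP [c d]; apply/andP; split; lra.
Qed.

Lemma llp_br (V : finType) (e : rel V) :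
  simple_graph e -> linear_leaf_power e -> blue_red_interval e.
Proof.
move=> [esym eirr] [N [t [w [f [[tr [sp0 [spP cov]]] [_ [wP [finj [_ dist]]]]]]]]].
case: (pickP (@predT V)) => [v0 _ | none]; last first.
  exists set0, (fun _ => 0), (fun _ => 0); split => // u; by have := none u.
have [sp [ss us cv ne]] : exists sp : seq N, [/\ sorted t sp, uniq sp,
    (forall x, (2 <= degree t x)%N -> x \in sp) & sp != [::]].
  case: sp0 spP cov => [|x s'] spP cov.
    by exists [:: f v0]; split => // z /cov; rewrite in_nil.
  by exists (x :: s'); move: spP => /andP [p u]; split.
have ws : forall a b, t a b -> w a b = w b a by move=> a b h; case: (wP a b h).
have wp : forall a b, t a b -> 0 <= w a b by move=> a b h; case: (wP a b h) => /andP [].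
have : forall v, exists ya : N * rat, attached t w sp (f v) ya.1 ya.2.
  by move=> v; have [y [a A]] := attach_exists w (f v) tr cv ne; exists (y, a).
move=> /fin_all_exists [g Hg].
pose a v := (g v).2. pose X v := Dsp w sp (g v).1.
have key : forall u v, u != v -> (e u v <-> a u + a v + `|X u - X v| <= 1).
  move=> u v uv; have fuv : f u != f v by rewrite (inj_eq finj).
  apply: iff_trans (dist u v uv) _.
  have C r := catdist_full r tr ws wp ss us (Hg u) (Hg v) fuv.
  split; first by move=> [r [/C -> ?]].
  by move=> h; exists (a u + a v + `|X u - X v|); split => //; apply/C.
exists [set v | a v <= 1/2], (fun v => X v - `|a v - 1/2|), (fun v => X v + `|a v - 1/2|).
split; first by move=> v; have := normr_ge0 (a v - 1/2); lra.
move=> u v; rewrite /in_itv.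
case: (eqVneq u v) => [<-|uv].
  rewrite eirr; split => //.
  move=> [[_ [_ [H _]]]|[[H1 [H2 _]]|[H1 [H2 _]]]]; [by [] | by rewrite H2 in H1 | by rewrite H1 in H2].

apply: iff_trans (key u v uv) _.
rewrite !inE /Defs.in_itv /=.
case: (lerP (a u) (1/2)) => hu; case: (lerP (a v) (1/2)) => hv.
- have l1 : X u - (1/2 - a u) <= X u + (1/2 - a u) by lra.
  have l2 : X v - (1/2 - a v) <= X v + (1/2 - a v) by lra.
  split.
    move=> /abs_sum [h1 h2]; left; do 3!split => //.
    by apply/(itvQ_meet l1 l2)/absle; split; lra.
  move=> [[_ [_ [_ /(itvQ_meet l1 l2) /absle [h1 h2]]]]|[[H _]|[_ [H _]]]];
    last (by case: H); last (by case: H).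
  by apply/abs_sum; split; lra.
- idtac.
  have l2 : X v - (a v - 1/2) <= X v + (a v - 1/2) by lra.
  split.
    move=> /abs_sum [h1 h2]; right; right; do 2!split => //.
    by apply/(itvQ_sub _ _ l2)/absle; split; lra.
  move=> [[_ [H _]]|[[H _]|[_ [_ /(itvQ_sub _ _ l2) /absle [h1 h2]]]]];
    [by case: H | by case: H | ].
  by apply/abs_sum; split; lra.
- idtac.
  have l1 : X u - (a u - 1/2) <= X u + (a u - 1/2) by lra.
  split.
    move=> /abs_sum [h1 h2]; right; left; do 2!split => //.
    by apply/(itvQ_sub _ _ l1)/absle; split; lra.
  move=> [[H _]|[[_ [_ /(itvQ_sub _ _ l1) /absle [h1 h2]]]|[H _]]];
    [by case: H | | by case: H].
  by apply/abs_sum; split; lra.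
- idtac.
  split.
    by move=> h; exfalso; have := normr_ge0 (X u - X v); lra.
  by move=> [[H _]|[[_ [H _]]|[H _]]]; case: H.
Qed.

Lemma le1_scale (s d z : rat) : 0 < s -> d - 1 = s * z -> (d <= 1 <-> z <= 0).
Proof. by move=> sp E; rewrite -subr_le0 E pmulr_rle0. Qed.

Lemma foldmin (l : seq rat) : all (fun x => 0 < x) l ->
  [/\ 0 < foldr Order.min 1 l, foldr Order.min 1 l <= 1 &
     forall x, x \in l -> foldr Order.min 1 l <= x].
Proof.
elim: l => [|y l IH] /=; first by split => //.
move=> /andP [y0 /IH [h1 h2 h3]]; split.
- by rewrite lt_min y0 h1.
- by rewrite ge_min h2 orbT.
- move=> x; rewrite in_cons => /orP [/eqP -> | xl]; first by rewrite ge_min lexx.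
  by rewrite ge_min h3 ?orbT.
Qed.

Lemma br_numeric (V : finType) (e : rel V) :
  simple_graph e -> blue_red_interval e ->
  exists (A Y : V -> rat), (forall v, 0 <= A v <= 1) /\ (forall u v, `|Y u - Y v| <= 1) /\
    (forall u v, u != v -> (e u v <-> A u + A v + `|Y u - Y v| <= 1)).
Proof.
move=> _ [B [lo [hi [Hle He]]]].
pose mm v := lo v + hi v. pose rr v := hi v - lo v.
have rr0 : forall v, 0 <= rr v by move=> v; have := Hle v; rewrite /rr; lra.
pose gf (p : V * V) := `|mm p.1 - mm p.2| - rr p.1 - rr p.2.
have [d [d0 d1 dle]] : exists d : rat, [/\ 0 < d, d <= 1 &
    forall p, 0 < gf p -> d <= gf p].
  pose l := [seq x <- map gf (enum {: V * V}) | 0 < x].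
  have al : all (fun x => 0 < x) l by apply/allP => x; rewrite mem_filter => /andP [].
  have [h1 h2 h3] := foldmin al; exists (foldr Order.min 1 l); split => // p gp.
  by apply: h3; rewrite mem_filter gp /= map_f // mem_enum.
have [M [Mb M1]] : exists M : rat, (forall v, `|mm v| + rr v <= M - 1) /\ 1 <= M.
  exists (1 + \sum_v (`|mm v| + rr v)); split.
    move=> v; have -> : 1 + \sum_v (`|mm v| + rr v) - 1 = \sum_v (`|mm v| + rr v) by ring.
    rewrite (bigD1 v) //= lerDl.
    by apply: sumr_ge0 => i _; apply: addr_ge0.
  by rewrite lerDl; apply: sumr_ge0 => i _; apply: addr_ge0.
have [s [s0 sM]] : exists s : rat, 0 < s /\ s * M = 1/4.
  exists (4 * M)^-1; split; first by rewrite invr_gt0; lra.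
  field; apply/eqP => h; lra.
pose eta := s * d / 4.
pose A v := if v \in B then 1/2 - s * rr v - eta else 1/2 + s * rr v + eta.
pose Y v := s * mm v.
have YE : forall u v, `|Y u - Y v| = s * `|mm u - mm v|.
  by move=> u v; rewrite /Y -mulrBr normrM gtr0_norm.
have srr : forall v, 0 <= s * rr v <= 1/4 - s.
  move=> v; have := Mb v; have := normr_ge0 (mm v); have := rr0 v; move=> *.
  apply/andP; split; first by apply: mulr_ge0 => //; lra.
  nra.
have eta0 : 0 < eta by rewrite /eta; apply: divr_gt0 => //; apply: mulr_gt0.
have eta1 : eta <= s / 4 by rewrite /eta; nra.
exists A, Y; split.
  move=> v; rewrite /A; have := srr v; case: (v \in B) => /andP [? ?]; apply/andP; split; lra.
split.
  move=> u v; rewrite YE.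
  have := Mb u; have := Mb v; have := rr0 u; have := rr0 v.
  have := ler_normB (mm u) (mm v) => *.
  nra.
move=> u v uv.
apply: iff_trans (He u v) _.
rewrite /in_itv YE /A.
have lu := Hle u; have lv := Hle v.
case bu: (u \in B); case bv: (v \in B); set D := (X in _ <-> X <= 1).
- apply: iff_trans (_ : _ <-> `|mm u - mm v| <= rr u + rr v) _.
    split.
      move=> [[_ [_ [_ H]]]|[[//]|[_ [//]]]].
      by move/(itvQ_meet lu lv): H.
    by move=> H; left; do 3!split => //; apply/(itvQ_meet lu lv).
  have E : D - 1 = s * (gf (u, v) - d / 2).
    rewrite /D /gf /eta /=; by field.
  apply: (iff_trans _ (iff_sym (le1_scale s0 E))).
  rewrite /gf /=; split => H; first by have := d0; lra.
  case: (lerP (gf (u, v)) 0) => [|g0]; first by rewrite /gf /=; lra.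
  by have := dle _ g0; rewrite /gf /=; lra.
- apply: iff_trans (_ : _ <-> `|mm v - mm u| <= rr u - rr v) _.
    split.
      move=> [[_ [//]]|[[//]|[_ [_ H]]]].
      by move/(itvQ_sub _ _ lv): H.
    by move=> H; right; right; do 2!split => //; apply/(itvQ_sub _ _ lv).
  have E : D - 1 = s * (`|mm v - mm u| - (rr u - rr v)) by rewrite /D distrC /eta /=; field.
  apply: (iff_trans _ (iff_sym (le1_scale s0 E))).
  by rewrite subr_le0.
- apply: iff_trans (_ : _ <-> `|mm u - mm v| <= rr v - rr u) _.
    split.
      move=> [[//]|[[_ [_ H]]|[//]]].
      by move/(itvQ_sub _ _ lu): H.
    by move=> H; right; left; do 2!split => //; apply/(itvQ_sub _ _ lu).
  have E : D - 1 = s * (`|mm u - mm v| - (rr v - rr u)) by rewrite /D /eta /=; field.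
  apply: (iff_trans _ (iff_sym (le1_scale s0 E))).
  by rewrite subr_le0.
- apply: iff_trans (_ : _ <-> False) _.
    by split => // [[[//]|[[_ [//]]|[//]]]].
  have E : D - 1 = s * (`|mm u - mm v| + rr u + rr v + d / 2) by rewrite /D /eta /=; field.
  apply: (iff_trans _ (iff_sym (le1_scale s0 E))).
  split => // H; have := normr_ge0 (mm u - mm v); have := rr0 u; have := rr0 v; lra.
Qed.

Lemma small_llp (V : finType) (e : rel V) :
  (#|V| <= 1)%N -> linear_leaf_power e.
Proof.
move=> /fintype_le1P all_eq.
have deg0 : forall x : V, degree (fun _ _ => false) x = 0%N.
  move=> x; rewrite /degree; apply/eqP; rewrite cards_eq0; apply/eqP/setP => y.
  by rewrite !inE.
have tr : is_tree (fun _ _ : V => false).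
  split => //; split => // x y; exists [::]; split.
    by rewrite /simple_path /= [y](all_eq x) eqxx.
  by move=> [|b q] // /andP [/andP [] ].
exists V, (fun _ _ => false), (fun _ _ => 0), id.
split; first by split => //; exists [::]; split => // x; rewrite deg0.
split => //; split => //; split => //; split.
  by move=> x; rewrite /is_leaf deg0; split => // _; exists x.
by move=> u v; rewrite [v](all_eq u) eqxx.
Qed.

Lemma pw_tele (V : finType) (Y : V -> rat) (w : V + V -> V + V -> rat) a L :
  (forall a b, w (inr a) (inr b) = `|Y a - Y b|) ->
  path (fun a b => Y a <= Y b) a L ->
  path_weight w (inr a) (map inr L) = Y (last a L) - Y a.
Proof.
move=> wE; elim: L a => [|b L IH] a /=; first by rewrite subrr.
move=> /andP [ab pL]; rewrite IH // wE distrC ger0_norm ?subr_ge0 //.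
ring.
Qed.

Lemma lw_tele (V : finType) (Y : V -> rat) (w : V + V -> V + V -> rat) (L : seq V) x0 :
  (forall a b, w (inr a) (inr b) = `|Y a - Y b|) -> L != [::] ->
  sorted (fun a b => Y a <= Y b) L ->
  lw w (map inr L) = Y (last x0 L) - Y (head x0 L).
Proof. by move=> wE; case: L => [//|a L] _ /= H; apply: pw_tele. Qed.

Lemma spine_match (N : eqType) (t : rel N) (s : seq N) :
  sorted t s -> uniq s ->
  match s with [::] => is_true true | x :: s' => is_true (path t x s' && uniq s) end.
Proof. by case: s => //= x s' -> ->. Qed.

Lemma dist_llp (V : finType) (e : rel V) (A Y : V -> rat) :
  (forall v, 0 <= A v <= 1) -> (forall u v, `|Y u - Y v| <= 1) ->
  (forall u v, u != v -> (e u v <-> A u + A v + `|Y u - Y v| <= 1)) ->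
  linear_leaf_power e.
Proof.
move=> HA HY He.
case: (leqP #|V| 1) => cV; first exact: small_llp.
have [v0 _] : exists v0 : V, v0 \in [set: V] by apply/card_gt0P; rewrite cardsT; lia.
pose ss := sort (fun u v => Y u <= Y v) (enum V).
have ssort : sorted (fun u v => Y u <= Y v) ss.
  by apply: sort_sorted => u v; apply: le_total.
have suniq : uniq ss by rewrite sort_uniq enum_uniq.
have smem : forall v, v \in ss by move=> v; rewrite mem_sort mem_enum.
have ssize : size ss = #|V| by rewrite size_sort cardE.
pose par (z : V + V) : V + V := match z with inl v => inr v | inr v => inr (nth v0 ss (index v ss).-1) end.
pose h (z : V + V) := match z with inl _ => #|V|.+1 | inr v => index v ss end.
have idx : forall v, (index v ss < #|V|)%N by move=> v; rewrite -ssize index_mem.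
have Hpar : forall z, par z = z \/ (h (par z) < h z)%N.
  case=> v /=; first by right; apply: leq_trans (idx v) _.
  case E: (index v ss) => [|i].
    by left; rewrite /= -E nth_index.
  right; rewrite /= index_uniq //; rewrite ssize; have := idx v; lia.
have Hi : forall k, (k < size ss)%N -> iter k par (inr (nth v0 ss k)) = inr (nth v0 ss 0).
  elim=> [//|k IH] lt; rewrite iterSr /= index_uniq //= IH //; lia.
have Hroot : forall z, exists k, iter k par z = inr (nth v0 ss 0).
  case=> v.
    exists (index v ss).+1; rewrite iterSr /=.
    by have := Hi (index v ss); rewrite nth_index // => -> //; rewrite index_mem.
  exists (index v ss).
  by have := Hi (index v ss); rewrite nth_index // => -> //; rewrite index_mem.
pose t := prel par.
have tr : is_tree t := parent_tree Hpar Hroot.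
have eqlr : forall a b : V, (inl a == inr b :> V + V) = false.
  by move=> a b; apply/negbTE/eqP.
have eqrl : forall a b : V, (inr a == inl b :> V + V) = false.
  by move=> a b; apply/negbTE/eqP.
have eqrr : forall a b : V, (inr a == inr b :> V + V) = (a == b).
  by move=> a b; apply/eqP/eqP => [[]|->].
have nbr_inl : forall v y, t (inl v) y = (y == inr v).
  by move=> v [u|u]; rewrite /t /prel /= ?eqlr ?eqrl ?eqrr ?andbF ?orbF // eq_sym.
have deg_inl : forall v, degree t (inl v) = 1%N.
  move=> v; rewrite /degree (_ : [set y | t (inl v) y] = [set inr v]) ?cards1 //.
  by apply/setP => y; rewrite !inE nbr_inl.
have inr_edge : forall i, (i.+1 < size ss)%N ->
    t (inr (nth v0 ss i)) (inr (nth v0 ss i.+1)).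
  move=> i lt; rewrite /t /prel /= (index_uniq v0 (i := i.+1)) //= eqxx orbT andbT.
  rewrite eqrr; apply/eqP => E; have /= := f_equal (fun z => index z ss) E.
  rewrite !index_uniq //; [exact: n_Sn | exact: ltnW].
have deg_inr : forall v, (2 <= degree t (inr v))%N.
  move=> v; have tl : t (inr v) (inl v).
    by rewrite /t /prel /=.
  case E: (index v ss) => [|i].
    have lt1 : (1 < size ss)%N by rewrite ssize.
    have ve : nth v0 ss 0 = v by rewrite -E nth_index.
    have := inr_edge 0%N lt1; rewrite ve => te.
    by apply: (deg2 tl te); rewrite eqlr.
  have lt : (i.+1 < size ss)%N by rewrite -E ssize idx.
  have ve : nth v0 ss i.+1 = v by rewrite -E nth_index.
  have := inr_edge i lt; rewrite ve => te.
  apply: (deg2 tl (_ : t (inr v) (inr (nth v0 ss i)))); last by rewrite eqlr.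
  by move: te; rewrite /t /prel eq_sym orbC.
pose w (x y : V + V) : rat := match x, y with
  | inl u, inr _ => A u | inr _, inl u => A u
  | inr a, inr b => `|Y a - Y b| | inl _, inl _ => 0 end.
pose sp := map (@inr V V) ss.
have ssp : sorted t sp.
  apply/(sortedP (inr v0)) => i; rewrite size_map => lt.
  rewrite !(nth_map v0) //; [exact: inr_edge | lia].
have usp : uniq sp by rewrite map_inj_uniq // => a b [].
have Dsp_eq : forall v, Dsp w sp (inr v) = Y v - Y (nth v0 ss 0).
  move=> v; rewrite /Dsp /sp index_map; last by move=> a b [].
  have kl : (index v ss < size ss)%N by rewrite index_mem.
  rewrite -map_take (@lw_tele V Y w _ v0) //.
  - rewrite -nth_last size_takel // nth_take // nth_index //.
    by rewrite -nth0 nth_take.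
  - by rewrite -size_eq0 size_takel.
  - exact: take_sorted.
have ws : forall a b, t a b -> w a b = w b a.
  by move=> [a|a] [b|b] _ //=; rewrite distrC.
have wp : forall a b, t a b -> 0 <= w a b.
  move=> [a|a] [b|b] _ /=; [by [] | by case/andP: (HA a) | by case/andP: (HA b) | exact: normr_ge0].
have Att : forall u, attached t w sp (inl u) (inr u) (A u).
  move=> u; right; split; first by apply/mapP => [[x _ []]].
  split; first exact: map_f.
  by rewrite nbr_inl eqxx.
exists (V + V)%type, t, w, inl.
split.
  split => //; exists sp; split; first exact (spine_match ssp usp).
  case=> v; first by rewrite deg_inl.
  by move=> _; apply: map_f.
split => //; split.
  move=> [a|a] [b|b] _ /=; split; rewrite ?lexx ?ler01 ?HA ?normr_ge0 ?HY //.
  exact: distrC.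
split; first by move=> a b [].
split.
  case=> v; split.
  - by move=> _; exists v.
  - by move=> _; rewrite /is_leaf deg_inl.
  - by rewrite /is_leaf leqNgt deg_inr.
  - by case.
move=> u v uv; apply: iff_trans (He u v uv) _.
have uv' : inl u != inl v :> V + V by [].
have DD : Dsp w sp (inr u) - Dsp w sp (inr v) = Y u - Y v by rewrite !Dsp_eq; ring.
have C r := catdist_full r tr ws wp ssp usp (Att u) (Att v) uv'.
split.
  by move=> H; exists (A u + A v + `|Y u - Y v|); split => //; apply/C; rewrite DD.
by move=> [r [/C -> Hr]]; rewrite -DD.
Qed.

Theorem theorem1 (V : finType) (e : rel V) :
  simple_graph e -> (blue_red_interval e <-> linear_leaf_power e).
Proof.
move=> sg; split; last exact: llp_br.
move=> br; have [A [Y [HA [HY He]]]] := br_numeric sg br.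
exact: dist_llp HA HY He.
Qed.
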